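(* For every odd prime $p$, $\gcd\big(S(2),\,2^p+1\big)=1$.
   Context: Let $p$ be an odd prime and $g$ an odd integer which is a primitive root modulo $p$ and modulo $2p$. Define $D_0^{(p)}=\{g^{2k}\bmod p : 0\le k\le \frac{p-1}{2}-1\}$, $D_1^{(p)}=\{g^{2k+1}\bmod p : 0\le k\le \frac{p-1}{2}-1\}$, $D_0^{(2p)}=\{g^{2k}\bmod 2p : 0\le k\le \frac{p-1}{2}-1\}$, $D_1^{(2p)}=\{g^{2k+1}\bmod 2p : 0\le k\le \frac{p-1}{2}-1\}$, viewed as subsets of $\{0,\dots,p-1\}$ resp. $\{0,1,\dots,2p-1\}$. For $j\in\{0,1\}$ let $2D_j^{(p)}=\{2a \bmod 2p : a\in D_j^{(p)}\}$. Let $C_1=D_1^{(2p)}\cup 2D_1^{(p)}\cup\{0\}$ and $C_0=D_0^{(2p)}\cup 2D_0^{(p)}\cup\{p\}$ (these partition $\{0,\dots,2p-1\}$). The binary sequence $s$ of period $2p$ is $s_i=1$ if $i\bmod 2p\in C_1$ and $s_i=0$ otherwise, and $S(2)=\sum_{i=0}^{2p-1}s_i2^i\in\mathbb{Z}$. *)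

(* Defs.v *)
From mathcomp Require Import all_boot all_order all_algebra.
Set Implicit Arguments. Unset Strict Implicit. Unset Printing Implicit Defensive.
Import GRing.Theory Num.Theory.
Local Open Scope ring_scope.

Definition primitive_root_mod (n : nat) (g : int) : Prop :=
  coprimez g n /\
  ((g ^+ totient n - 1) %% (n%:Z))%Z = 0 /\
  (forall k : nat, (0 < k < totient n)%N -> ((g ^+ k - 1) %% (n%:Z))%Z != 0).

Definition Dset (n : nat) (g : int) (p j : nat) : seq nat :=
  [seq `|((g ^+ (2 * k + j)%N) %% (n%:Z))%Z|%N | k <- iota 0 (p.-1)./2].

Definition twoDset (g : int) (p j : nat) : seq nat :=
  [seq ((2 * a) %% (2 * p))%N | a <- Dset p g p j].

Definition inC1 (g : int) (p i : nat) : bool :=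
  [|| i \in Dset (2 * p) g p 1, i \in twoDset g p 1 | i == 0%N].

Definition sseq (g : int) (p i : nat) : nat := inC1 g p (i %% (2 * p)).

Definition S2 (g : int) (p : nat) : nat :=
  (\sum_(i < 2 * p) sseq g p i * 2 ^ i)%N.

(* Main.v *)
Require Import Defs.
From mathcomp Require Import all_boot all_order all_algebra.
From mathcomp Require Import all_boot all_order all_algebra all_field.
From mathcomp Require Import zify ring lra.
Set Implicit Arguments. Unset Strict Implicit. Unset Printing Implicit Defensive.
Import GRing.Theory Num.Theory.
Local Open Scope ring_scope.

Lemma reindex_mul (V : nmodType) (p : nat) (F : nat -> V) (u : nat) :
  prime p -> ~~ (p %| u)%N ->
  \sum_(a < p) F ((a * u) %% p)%N = \sum_(a < p) F a.
Proof.
move=> pp pu; have p0 : (0 < p)%N by exact: prime_gt0.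
pose h (a : 'I_p) := Ordinal (ltn_pmod (a * u) p0).
have hinj : injective h.
  have W : forall a b : 'I_p, (a <= b)%N -> h a = h b -> a = b.
    move=> a b ab /(congr1 val) /= E; apply: val_inj => /=.
    have : (b * u == a * u %[mod p])%N by rewrite E.
    rewrite eqn_mod_dvd ?leq_mul2r ?ab ?orbT // -mulnBl Euclid_dvdM // (negbTE pu) orbF.
    move=> /dvdn_leq; case: (posnP (b - a)) => [|bp]; first by lia.
    by move=> /(_ isT); have := ltn_ord b; lia.
  move=> a b E; case: (leqP a b) => ab; first exact: W.
  by symmetry; apply: W; [exact: ltnW|].
by rewrite [RHS](reindex_inj hinj).
Qed.

Section Gauss.
Variables (R : comRingType) (p : nat) (chi : nat -> int) (gam : R).
Hypotheses (pp : prime p) (Hmod : forall a, chi (a %% p)%N = chi a) (H0 : chi 0 = 0)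
  (Hmul : forall a b, chi (a * b)%N = chi a * chi b)
  (Hsq : forall a, ~~ (p %| a)%N -> chi a * chi a = 1)
  (Hsum : \sum_(a < p) chi a = 0) (Hg : gam ^+ p = 1)
  (Hs : \sum_(k < p) gam ^+ k = 0).

Lemma gexp n : gam ^+ n = gam ^+ (n %% p).
Proof. by rewrite {1}(divn_eq n p) exprD mulnC exprM Hg expr1n mul1r. Qed.

Lemma gauss : (\sum_(a < p) (chi a)%:~R * gam ^+ a) * (\sum_(a < p) (chi a)%:~R * gam ^+ a)
  = (chi p.-1)%:~R * p%:R.
Proof.
have p0 : (0 < p)%N by exact: prime_gt0.
rewrite big_distrl /=.
transitivity (\sum_(a < p) \sum_(c < p) (chi c)%:~R * gam ^+ ((a * (1 + c)) %% p)).
  apply: eq_bigr => a _; rewrite big_distrr /=.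
  case: (eqVneq (nat_of_ord a) 0%N) => [a0|an0].
    rewrite a0 H0 big1; last by move=> b _; rewrite !mul0r.
    under eq_bigr do rewrite mul0n mod0n expr0 mulr1.
    by rewrite -rmorph_sum Hsum.
  have pa : ~~ (p %| a)%N.
    apply/negP => /dvdn_leq; rewrite lt0n an0 => /(_ isT); have := ltn_ord a; lia.
  rewrite -(reindex_mul (fun b => (chi a)%:~R * gam ^+ a * ((chi b)%:~R * gam ^+ b)) pp pa).
  apply: eq_bigr => c _.
  rewrite Hmod Hmul -(gexp (c * a)) -(gexp (a * (1 + c))).
  have -> : (a * (1 + c) = a + c * a)%N by rewrite mulnDr muln1 mulnC.
  rewrite exprD rmorphM /=.
  have E : (chi a)%:~R * (chi a)%:~R = 1 :> R by rewrite -rmorphM /= Hsq.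
  set ca := (chi a)%:~R in E *; set cc := (chi c)%:~R.
  set ga := gam ^+ a; set gb := gam ^+ (c * a).
  transitivity (cc * (ca * ca) * (ga * gb)); first by ring.
  by rewrite E mulr1.
rewrite exchange_big /=.
transitivity (\sum_(c < p) (chi c)%:~R * ((nat_of_ord c == p.-1)%:R * p%:R : R)).
  apply: eq_bigr => c _; rewrite -big_distrr /=; congr (_ * _).
  case: (eqVneq (nat_of_ord c) p.-1) => [cE|cn].
    have E1 : (1 + p.-1 = p)%N by lia.
    under eq_bigr do rewrite cE E1 modnMl expr0.
    by rewrite sumr_const card_ord mul1r.
  have pc : ~~ (p %| 1 + c)%N.
    move/eqP: cn => cn; apply/negP => /dvdn_leq; have := ltn_ord c; lia.
  by rewrite (reindex_mul (fun k => gam ^+ k) pp pc) Hs mul0r.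
have pl : (p.-1 < p)%N by lia.
rewrite (bigD1 (Ordinal pl)) //= eqxx mul1r big1 ?addr0 //.
move=> i /negbTE; rewrite -(inj_eq val_inj) /= => ->; by rewrite mul0r mulr0.
Qed.
End Gauss.

Lemma modz_absn (g : int) (n : nat) : (0 < n)%N -> (g %% n)%Z = (`|(g %% n)%Z|%N)%:Z.
Proof. by move=> n0; rewrite gez0_abs // modz_ge0 // eqz_nat -lt0n. Qed.

Lemma PoszX (m k : nat) : (m%:Z) ^+ k = (m ^ k)%N%:Z.
Proof. by rewrite -!natz natrX. Qed.

Lemma powmodz (g : int) (n k : nat) : (0 < n)%N ->
  (g ^+ k %% n)%Z = ((`|(g %% n)%Z| ^ k %% n)%N)%:Z.
Proof. by move=> n0; rewrite -modzXm (modz_absn g n0) PoszX modz_nat. Qed.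

Lemma DsetN (g : int) (n p j : nat) : (0 < n)%N ->
  Dset n g p j = [seq (`|(g %% n)%Z| ^ (2 * k + j) %% n)%N | k <- iota 0 (p.-1)./2].
Proof. by move=> n0; apply: eq_map => k; rewrite powmodz // absz_nat. Qed.

Lemma prim_nat (g : int) (n k : nat) : (1 < n)%N ->
  (((g ^+ k - 1) %% n)%Z == 0) = ((`|(g %% n)%Z| ^ k %% n)%N == 1%N).
Proof.
move=> n1; have n0 : (0 < n)%N by lia.
have -> : (((g ^+ k - 1) %% n)%Z == 0) = (n %| g ^+ k - 1)%Z.
  by apply/idP/idP => [/eqP/dvdz_mod0P | /dvdz_mod0P/eqP].
rewrite -eqz_mod_dvd powmodz // (modz_small (m := 1)) ?eqz_nat //.
Qed.

Lemma mod2p_p (g : int) (p : nat) : (0 < p)%N ->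
  (`|(g %% (2 * p)%N)%Z| %% p)%N = `|(g %% p)%Z|%N.
Proof.
move=> p0.
have E : (g %% p)%Z = ((g %% (2 * p)%N)%Z %% p)%Z.
  by rewrite {1}(divz_eq g (2 * p)%N) PoszM mulrA modzMDl.
apply/eqP; rewrite -eqz_nat -modz_nat -modz_absn ?muln_gt0 // -E.
by rewrite -modz_absn.
Qed.

Lemma mod2p_odd (g : int) (p : nat) : (0 < p)%N -> ~~ (2 %| g)%Z ->
  odd `|(g %% (2 * p)%N)%Z|%N.
Proof.
move=> p0 g2; rewrite -[odd _]negbK -dvdn2; apply: contra g2 => h.
have h' : (2 %| (g %% (2 * p)%N))%Z.
  by rewrite (modz_absn g (_ : 0 < 2 * p)%N) ?muln_gt0 //.
rewrite (divz_eq g (2 * p)%N) rpredD //.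
by rewrite PoszM mulrA; apply: dvdz_mulr; apply: dvdz_mull; exact: dvdzz.
Qed.

Definition NR g p a := ((a %% p)%N \in Dset p g p 1).
Definition chi g p a : int := if (p %| a)%N then 0 else if NR g p a then -1 else 1.

Section Chi.
Variables (p : nat) (g : int) (gp : nat).
Hypotheses (pp : prime p) (po : odd p)
  (HD : forall j, Dset p g p j = [seq (gp ^ (2 * k + j) %% p)%N | k <- iota 0 (p.-1)./2])
  (Hcop : ~~ (p %| gp)%N) (Hord : forall k, (0 < k < p.-1)%N -> (gp ^ k %% p != 1)%N)
  (Hfer : (gp ^ p.-1 %% p = 1)%N).
Variable g2 : nat.
Hypotheses (HD2 : forall j, Dset (2 * p) g p j = [seq (g2 ^ (2 * k + j) %% (2 * p))%N | k <- iota 0 (p.-1)./2])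
  (Hg2o : odd g2) (Hg2p : (g2 %% p = gp)%N).

Lemma p3 : (2 < p)%N.
Proof.
have h1 := prime_gt1 pp.
have : p != 2%N by apply/eqP=> E; move: po; rewrite E.
lia.
Qed.

Lemma pX k : ~~ (p %| gp ^ k)%N.
Proof.
elim: k => [|k IH]; first by rewrite expn0 dvdn1; have := prime_gt1 pp; lia.
by rewrite expnS Euclid_dvdM // negb_or Hcop IH.
Qed.

Lemma log_uniq i j : (i < p.-1)%N -> (j < p.-1)%N -> (gp ^ i %% p = gp ^ j %% p)%N -> i = j.
Proof.
have W : forall i j, (i <= j)%N -> (j < p.-1)%N -> (gp ^ i %% p = gp ^ j %% p)%N -> i = j.
  move=> {}i {}j ij jl E.
  have gp0 : (0 < gp)%N by rewrite lt0n; apply/negP => /eqP g0; move: Hcop; rewrite g0 dvdn0.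
  have ej : (gp ^ j = gp ^ i * gp ^ (j - i))%N by rewrite -expnD subnKC.
  have : (gp ^ i * gp ^ (j - i) == gp ^ i * 1 %[mod p])%N by rewrite muln1 -ej E.
  have l1 : (1 <= gp ^ (j - i))%N by rewrite expn_gt0 gp0.
  rewrite eqn_mod_dvd; last by rewrite leq_mul2l l1 orbT.
  rewrite -mulnBr Euclid_dvdM // (negbTE (pX _)) /=.
  rewrite -eqn_mod_dvd // => /eqP.
  rewrite (modn_small (prime_gt1 pp)) => E1.
  case: (posnP (j - i)) => [ji|jp]; first by move: ij ji; clear; lia.
  have : (0 < j - i < p.-1)%N by move: jp jl; clear; lia.
  by move/Hord; rewrite E1 eqxx.
move=> il jl E; case: (leqP i j) => ij; first exact: W.
by symmetry; apply: W => //; exact: ltnW.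
Qed.

Lemma log_ex a : ~~ (p %| a)%N -> exists2 k, (k < p.-1)%N & (a %% p = gp ^ k %% p)%N.
Proof.
move=> pa; have p0 := prime_gt0 pp.
set s := [seq (gp ^ k %% p)%N | k <- iota 0 p.-1].
have us : uniq s.
  rewrite map_inj_in_uniq ?iota_uniq // => x y; rewrite !mem_iota !add0n.
  by move=> /andP[_ hx] /andP[_ hy]; apply: log_uniq.
have inI : forall x, ~~ (p %| x)%N -> (x %% p)%N \in iota 1 p.-1.
  move=> x px; rewrite mem_iota lt0n; apply/andP; split; first exact: px.
  by rewrite add1n (prednK p0) ltn_pmod.
have sub : {subset s <= iota 1 p.-1}.
  by move=> x /mapP[k _ ->]; rewrite -modn_mod; apply: inI; rewrite /dvdn modn_mod; exact: (pX k).
have sz : (size (iota 1 p.-1) <= size s)%N by rewrite size_map !size_iota.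
have [_ eqs] := uniq_min_size us sub sz.
have : (a %% p)%N \in s by rewrite eqs; exact: inI.
by case/mapP => k; rewrite mem_iota add0n => /andP[_ hk] E; exists k.
Qed.

Lemma gpmod n : (gp ^ n %% p = gp ^ (n %% p.-1) %% p)%N.
Proof.
by rewrite {1}(divn_eq n p.-1) [X in (gp ^ (X + _))%N]mulnC expnD expnM -modnMml -modnXm Hfer exp1n modnMml mul1n.
Qed.

Lemma half_pred : ((p.-1)./2 * 2 = p.-1)%N.
Proof.
have op : ~~ odd p.-1 by move: po; rewrite -{1}(prednK (prime_gt0 pp)) /=.
by rewrite -{2}(odd_double_half p.-1) (negbTE op) add0n -muln2.
Qed.

Lemma NR_odd a k : (k < p.-1)%N -> (a %% p = gp ^ k %% p)%N -> NR g p a = odd k.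
Proof.
move=> hk E; rewrite /NR HD; have hh := half_pred.
apply/mapP/idP.
  case=> m; rewrite mem_iota add0n => /andP[_ hm] E2; rewrite E in E2.
  have hm2 : (2 * m + 1 < p.-1)%N by move: hm hh; clear; lia.
  by rewrite (log_uniq hk hm2 E2) addn1 /= oddM.
move=> ok; exists k./2.
  have := odd_double_half k; rewrite ok -muln2 => hk2.
  by rewrite mem_iota add0n; move: hk hk2 hh; clear; lia.
have := odd_double_half k; rewrite ok -muln2 => hk2.
by rewrite E; congr (gp ^ _ %% p)%N; move: hk2; clear; lia.
Qed.

Lemma NR_mul a b : ~~ (p %| a)%N -> ~~ (p %| b)%N -> NR g p (a * b) = NR g p a (+) NR g p b.
Proof.
move=> pa pb; have [i hi Ei] := log_ex pa; have [j hj Ej] := log_ex pb.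
have p1 : (0 < p.-1)%N by have := p3; clear; lia.
rewrite (NR_odd hi Ei) (NR_odd hj Ej) (@NR_odd _ ((i + j) %% p.-1)) ?ltn_pmod //.
  by rewrite odd_mod; [rewrite oddD | rewrite -half_pred oddM andbF].
by rewrite -modnMm Ei Ej modnMm -expnD gpmod.
Qed.

Lemma NR_gp : NR g p gp.
Proof. by rewrite (@NR_odd _ 1) ?expn1 //; have := p3; clear; lia. Qed.

Lemma chi_mod a : chi g p (a %% p) = chi g p a.
Proof. by rewrite /chi /NR /dvdn !modn_mod. Qed.

Lemma chi0 : chi g p 0 = 0.
Proof. by rewrite /chi dvdn0. Qed.

Lemma chi_mul a b : chi g p (a * b) = chi g p a * chi g p b.
Proof.
rewrite /chi; case pa: (p %| a)%N; first by rewrite dvdn_mulr // mul0r.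
case pb: (p %| b)%N; first by rewrite dvdn_mull // mulr0.
rewrite Euclid_dvdM // pa pb /= NR_mul ?pa ?pb //.
by case: (NR g p a); case: (NR g p b).
Qed.

Lemma chi_sq a : ~~ (p %| a)%N -> chi g p a * chi g p a = 1.
Proof. by rewrite /chi => /negbTE ->; case: (NR g p a). Qed.

Lemma chi_sum : \sum_(a < p) chi g p a = 0.
Proof.
have S : \sum_(a < p) chi g p ((a * gp) %% p)%N = \sum_(a < p) chi g p a
  := reindex_mul (fun a => chi g p a) pp Hcop.
rewrite (eq_bigr (fun a : 'I_p => chi g p a * chi g p gp)) in S; last first.
  by move=> a _; rewrite chi_mod chi_mul.
rewrite -mulr_suml /chi (negbTE Hcop) NR_gp in S.
move: S; set x := \sum_(i < p) _; lia.
Qed.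

Lemma D2_mem i : (i < 2 * p)%N -> (i \in Dset (2 * p) g p 1) = odd i && NR g p i.
Proof.
move=> ip; have p0 := prime_gt0 pp.
rewrite /NR HD HD2; apply/mapP/andP.
  case=> m hm ->; split.
    by rewrite odd_mod ?oddM ?andbF // oddX Hg2o orbT.
  apply/mapP; exists m => //.
  by rewrite modn_dvdm ?dvdn_mull // -modnXm Hg2p.
case=> oi /mapP[m hm E]; exists m => //.
have c2 : coprime 2 p by rewrite coprime2n.
have : (i == g2 ^ (2 * m + 1) %[mod 2 * p])%N.
  rewrite chinese_remainder // !modn2 oi oddX Hg2o orbT eqxx /=.
  by rewrite E -[(g2 ^ _ %% p)%N]modnXm Hg2p.
by rewrite (modn_small ip) => /eqP.
Qed.

Lemma Dp_lt a : a \in Dset p g p 1 -> (a < p)%N.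
Proof. by rewrite HD => /mapP[k _ ->]; rewrite ltn_pmod // prime_gt0. Qed.

Lemma twoD_mem i : (i < 2 * p)%N -> (i \in twoDset g p 1) = ~~ odd i && NR g p i./2.
Proof.
move=> ip; rewrite /twoDset /NR; apply/mapP/andP.
  case=> a ha ->; have ap := Dp_lt ha.
  rewrite modn_small ?ltn_mul2l //= oddM /= mul2n doubleK; split => //.
  by rewrite modn_small.
case=> ei ha; exists (i./2 %% p)%N => //.
have hi : (i./2 < p)%N by move: ip; clear; rewrite -(odd_double_half i); lia.
rewrite (modn_small hi) mul2n.
have := odd_double_half i; rewrite (negbTE ei) add0n => ->.
by rewrite modn_small.
Qed.

Lemma NR_mod a : NR g p (a %% p) = NR g p a.
Proof. by rewrite /NR modn_mod. Qed.

Lemma NR0 : NR g p 0 = false.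
Proof.
apply/negP; rewrite /NR mod0n HD => /mapP[k _] /esym /eqP.
by rewrite -/(dvdn _ _) => h; move: (pX (2 * k + 1)); rewrite h.
Qed.

Lemma sseqE i : (i < 2 * p)%N -> sseq g p i =
  [|| i == 0%N, odd i && NR g p i | ~~ odd i && NR g p i./2] :> nat.
Proof.
move=> ip; rewrite /sseq /inC1 (modn_small ip) D2_mem // twoD_mem //.
by case: (i == 0%N); rewrite ?orbT //= orbF.
Qed.

Lemma chiE a : ~~ (p %| a)%N -> chi g p a = if NR g p a then -1 else 1.
Proof. by rewrite /chi => /negbTE ->. Qed.

Lemma key (R : comRingType) i : (0 < i < p)%N ->
  ((sseq g p i)%:R - (sseq g p (p + i))%:R : R)
   = (NR g p 2)%:R * (chi g p i)%:~R * (-1) ^+ i.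
Proof.
move=> /andP[i0 ip]; have p3 := p3.
have ip2 : (i < 2 * p)%N by move: ip; clear; lia.
have pi2 : (p + i < 2 * p)%N by move: ip; clear; lia.
have pi : ~~ (p %| i)%N by apply/negP => /(dvdn_leq i0); move: ip; clear; lia.
have p2 : ~~ (p %| 2)%N by apply/negP => /(dvdn_leq (isT : (0 < 2)%N)); move: p3; clear; lia.
have NRpi : NR g p (p + i) = NR g p i by rewrite -NR_mod modnDl NR_mod.
rewrite (sseqE ip2) (sseqE pi2) (chiE pi) oddD po -signr_odd.
have in0 : (i == 0%N) = false by move: i0; clear; lia.
have pin0 : (p + i == 0%N) = false by move: i0; clear; lia.
rewrite in0 pin0 /=.
case oi: (odd i) => /=.
  set h := (p + i)./2.
  have hh : (p + i = 2 * h)%N.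
    have := odd_double_half (p + i); rewrite oddD po oi /= add0n -mul2n => ->.
    done.
  have ph : ~~ (p %| h)%N.
    apply/negP => hd; have h0 : (0 < h)%N by move: hh i0; clear; lia.
    have := dvdn_leq h0 hd; move: hh ip; clear; lia.
  have E : NR g p i = NR g p 2 (+) NR g p h by rewrite -NRpi hh NR_mul.
  rewrite orbF E.
  by case: (NR g p 2); case: (NR g p h); rewrite /= ?mulr1 ?mul1r ?mul0r ?rmorphN ?rmorph1 /=; ring.
set h := i./2.
have hh : (i = 2 * h)%N.
  by have := odd_double_half i; rewrite oi add0n -mul2n.
have ph : ~~ (p %| h)%N.
  apply/negP => hd; have h0 : (0 < h)%N by move: hh i0; clear; lia.
  have := dvdn_leq h0 hd; move: hh ip; clear; lia.
have E : NR g p i = NR g p 2 (+) NR g p h by rewrite {1}hh NR_mul.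
rewrite orbF NRpi E.
by case: (NR g p 2); case: (NR g p h); rewrite /= ?mulr1 ?mul1r ?mul0r ?rmorphN ?rmorph1 /=; ring.
Qed.

Lemma S2E (R : comRingType) : (2 : R) ^+ p = -1 ->
  (S2 g p)%:R = 1 + (NR g p 2)%:R * \sum_(a < p) (chi g p a)%:~R * (-2 : R) ^+ a.
Proof.
move=> h2; have p0 := prime_gt0 pp.
rewrite /S2 natr_sum.
under eq_bigr do rewrite natrM natrX.
rewrite mul2n -addnn big_split_ord /= -big_split /=.
transitivity (\sum_(i < p) (((i : nat) == 0%N)%:R
   + (NR g p 2)%:R * ((chi g p i)%:~R * (-2 : R) ^+ i))).
  apply: eq_bigr => i _ /=.
  rewrite exprD h2.
  case: (posnP i) => [i0 | i0].
    rewrite i0 addn0 chi0 !expr0 mul0r mulr0 addr0.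
    have p2 : (p < 2 * p)%N by move: p0; clear; lia.
    have z2 : (0 < 2 * p)%N by move: p0; clear; lia.
    have pn0 : (p == 0%N) = false by move: p0; clear; lia.
    rewrite (sseqE z2) (sseqE p2) po pn0 /= -NR_mod modnn NR0 /=.
    by rewrite mulr1 mul0r addr0.
  have ip : (0 < i < p)%N by rewrite i0 ltn_ord.
  set t := 2 ^+ i.
  transitivity (((sseq g p i)%:R - (sseq g p (p + i))%:R) * t); first by ring.
  rewrite key // add0r.
  have E2 : (-2 : R) ^+ i = (-1) ^+ i * t by rewrite /t -exprMn mulN1r.
  rewrite E2; set s1 := (-1) ^+ i; set c1 := (chi g p i)%:~R; set e1 := (NR g p 2)%:R; ring.
rewrite big_split /= -big_distrr /=; congr (_ + _).
rewrite (bigD1 (Ordinal p0)) //= big1 ?addr0 //.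
move=> i /negbTE; rewrite -(inj_eq val_inj) /= => -> //.
Qed.
End Chi.

Lemma exp_gcd (R : ringType) (x : R) (m n : nat) : (0 < m)%N ->
  x ^+ m = 1 -> x ^+ n = 1 -> x ^+ (gcdn m n) = 1.
Proof.
move=> m0 xm xn; have [a _ /dvdnP[k hk]] := Bezoutl n m0.
by rewrite -[LHS]mulr1 -(expr1n _ a) -{1}xn -exprM -exprD [(n * a)%N]mulnC hk mulnC exprM xm !expr1n.
Qed.

Lemma lemma10_aux (p : nat) (g : int) :
  prime p -> odd p ->
  ~~ (2 %| g)%Z ->
  primitive_root_mod p g -> primitive_root_mod (2 * p) g ->
  gcdn (S2 g p) (2 ^ p + 1) = 1%N.
Proof.
move=> pp po g2n [_ [fer1 ord1]] _.
have p0 := prime_gt0 pp; have p1 := prime_gt1 pp.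
rewrite totient_prime // in fer1 ord1.
set gp := `|(g %% p)%Z|%N; set g2 := `|(g %% (2 * p)%N)%Z|%N.
have Hfer : (gp ^ p.-1 %% p = 1)%N by apply/eqP; rewrite -prim_nat // fer1.
have Hord : forall k, (0 < k < p.-1)%N -> (gp ^ k %% p != 1)%N.
  by move=> k hk; rewrite -prim_nat //; exact: ord1.
have Hcop : ~~ (p %| gp)%N.
  apply/negP => h; move: Hfer; have : (p %| gp ^ p.-1)%N.
    by apply: dvdn_exp => //; move: p1; clear; lia.
  by rewrite /dvdn => /eqP ->.
have HD : forall j, Dset p g p j = [seq (gp ^ (2 * k + j) %% p)%N | k <- iota 0 (p.-1)./2].
  by move=> j; exact: DsetN.
have HD2 : forall j, Dset (2 * p) g p j = [seq (g2 ^ (2 * k + j) %% (2 * p))%N | k <- iota 0 (p.-1)./2].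
  by move=> j; apply: DsetN; rewrite muln_gt0.
have Hg2o : odd g2 by exact: mod2p_odd.
have Hg2p : (g2 %% p = gp)%N by exact: mod2p_p.
have p3 : (2 < p)%N.
  have : p != 2%N by apply/eqP => E; move: po; rewrite E.
  by move: p1; clear; lia.
set S := S2 g p; set N := (2 ^ p + 1)%N.
have N0 : (0 < N)%N by rewrite /N addn1.
apply/eqP; apply/negPn/negP => nd.
have d1 : (1 < gcdn S N)%N.
  by move: nd; have := gcdn_gt0 S N; rewrite N0 orbT; clear; lia.
set q := pdiv (gcdn S N).
have qp : prime q by exact: pdiv_prime.
have qS : (q %| S)%N by apply: dvdn_trans (pdiv_dvd _) (dvdn_gcdl _ _).
have qN : (q %| N)%N by apply: dvdn_trans (pdiv_dvd _) (dvdn_gcdr _ _).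
have chq := pchar_Fp qp.
have natF : forall n, (q %| n)%N = (n%:R == 0 :> 'F_q) by move=> n; exact: dvdn_pcharf.
have h2 : (2 : 'F_q) ^+ p = -1.
  by move: qN; rewrite natF /N natrD natrX addr_eq0 => /eqP.
have hS := S2E pp po HD Hcop Hord Hfer HD2 Hg2o Hg2p h2.
move: qS; rewrite natF -/S => /eqP; rewrite hS => {}hS.
have hsum := chi_sum pp po HD Hcop Hord Hfer Hg2o Hg2p.
have hp1 : ~~ (p %| p.-1)%N.
  by apply/negP => /dvdn_leq; move: p3; clear; lia.
have q2 : q != 2%N.
  apply/eqP => q2; move: qN; rewrite q2 /N dvdn2 oddD oddX /= orbF.
  by move: p0; clear; lia.
case q3: (q == 3%N).
  have h3 : (3%:R : 'F_q) = 0 by apply/eqP; rewrite -natF (eqP q3).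
  have hm2 : (-2 : 'F_q) = 1.
    by move: h3; rewrite -natr1 => /eqP; rewrite addr_eq0 => /eqP ->; rewrite opprK.
  rewrite hm2 in hS.
  rewrite (eq_bigr (fun a : 'I_p => (chi g p a)%:~R)) in hS; last first.
    by move=> a _; rewrite expr1n mulr1.
  rewrite -rmorph_sum hsum mulr0 addr0 in hS.
  by move/eqP: hS; rewrite oner_eq0.
have n3 : (3%:R : 'F_q) != 0 by rewrite -natF dvdn_prime2 // q3.
have hg : (-2 : 'F_q) ^+ p = 1.
  by rewrite exprNn h2 -signr_odd po expr1 mulrNN mulr1.
have hs : \sum_(k < p) (-2 : 'F_q) ^+ k = 0.
  have := subrX1 (-2 : 'F_q) p; rewrite hg subrr => /esym/eqP; rewrite mulf_eq0.
  case/orP => [/eqP h|/eqP //]; exfalso; move/negP: n3; apply; apply/eqP.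
  have e3 : (3%:R : 'F_q) = - (-2 - 1) by rewrite opprB opprK addrC natr1.
  by rewrite e3 h oppr0.
have gs := gauss pp (@chi_mod p g) (chi0 p g) (chi_mul pp po HD Hcop Hord Hfer Hg2o Hg2p)
  (fun a => @chi_sq p g a) hsum hg hs.
move: hS; case: (NR g p 2) => /= hS; last first.
  by move/eqP: hS; rewrite mul0r addr0 oner_eq0.
have hG : \sum_(a < p) (chi g p a)%:~R * (-2 : 'F_q) ^+ a = -1.
  move: hS; rewrite mul1r => hS. apply/eqP; rewrite -addr_eq0 addrC hS //.
rewrite hG mulrNN mulr1 in gs.
have q3' : (2 < q)%N by move: (prime_gt1 qp) q2; clear; lia.
have qle : (q <= p)%N.
  move: gs; rewrite /chi (negbTE hp1); case: (NR g p p.-1) => /= gs.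
    have : (q %| p.+1)%N.
      have e : (-1)%:~R * p%:R = - (p%:R : 'F_q) by rewrite rmorphN1 mulN1r.
      by rewrite e in gs; rewrite natF -natr1 addr_eq0 -[p%:R]opprK -gs.
    move=> qd; have qn : q != p.+1.
      apply/eqP => E; have : (2 %| q)%N by rewrite E dvdn2 /= po.
      by rewrite dvdn_prime2 // eq_sym (negbTE q2).
    by move: (dvdn_leq (ltn0Sn _) qd) qn; clear; lia.
  have : (q %| p.-1)%N.
    rewrite natF; apply/eqP; apply: (addIr 1); rewrite add0r natr1 (prednK p0).
    have e : 1%:~R * p%:R = (p%:R : 'F_q) by rewrite rmorph1 mul1r.
    by rewrite e in gs; exact: esym gs.
  by move/dvdn_leq; move: p3; clear; lia.
have x2p : (2 : 'F_q) ^+ (2 * p) = 1 by rewrite mulnC exprM h2 expr2 mulrNN mulr1.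
have x0 : (2 : 'F_q) != 0 by rewrite -natF dvdn_prime2 // q2.
have xq : (2 : 'F_q) ^+ q.-1 = 1.
  have : (2 : 'F_q) ^+ q = 2 by rewrite -[X in _ ^+ X](card_Fp qp) expf_card.
  rewrite -[X in _ ^+ X](prednK (prime_gt0 qp)) exprS => h.
  by apply: (mulfI x0); rewrite mulr1.
have p2 : (0 < 2 * p)%N by rewrite muln_gt0 p0.
have xd := exp_gcd p2 x2p xq.
set d := gcdn (2 * p) q.-1 in xd.
have dpos : (0 < d)%N by rewrite gcdn_gt0 muln_gt0 p0.
have dq : (d <= q.-1)%N by apply: dvdn_leq; [move: q3'; clear; lia | exact: dvdn_gcdr].
have dp : coprime d p.
  rewrite coprime_sym prime_coprime //; apply/negP => /(dvdn_leq dpos).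
  by move: dq qle q3'; clear; lia.
have d2 : (d %| 2)%N by rewrite -(Gauss_dvdl _ dp) dvdn_gcdl.
have x22 : (2 : 'F_q) ^+ 2 = 1.
  case/dvdnP: d2 => k hk; transitivity ((2 : 'F_q) ^+ (d * k)); first by rewrite mulnC -hk.
  by rewrite exprM xd expr1n.
move/negP: n3; apply; apply/eqP.
have e3 : (3%:R : 'F_q) = 2 ^+ 2 - 1.
  by rewrite -natrX (_ : (2 ^ 2 = 3.+1)%N) // -[in RHS]natr1 addrK.
by rewrite e3 x22 subrr.
Qed.

Local Close Scope ring_scope.

Theorem lemma10 (p : nat) (g : int) :
  prime p -> odd p ->
  ~~ (2 %| g)%Z ->
  primitive_root_mod p g -> primitive_root_mod (2 * p) g ->
  gcdn (S2 g p) (2 ^ p + 1) = 1%N.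
Proof. exact: lemma10_aux. Qed.
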